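(* Let $n\ge2$ and let $F:\mathbf{R}^n\to\mathbf{R}$ be an integrand. (i) $\mathcal{D}(F)$ is the support function of $K_F$, i.e. $\mathcal{D}(F)(x)=\sup_{y\in K_F}\langle x,y\rangle$ for all $x\in\mathbf{R}^n$; in particular $\mathcal{D}(F)$ is convex. Moreover, if $G:\mathbf{R}^n\to\mathbf{R}$ is any convex, 1-homogeneous, positive function with $G\le F$, then $G\le\mathcal{D}(F)$. (ii) For every $v\in\mathbb{S}^{n-1}$ and $\overline{x}\in K_F$ the following are equivalent: (a) $\mathcal{D}(F)(v)=\langle v,\overline{x}\rangle$; (b) $\overline{x}\in\mathcal{D}(F)(v)v+v^\perp$; (c) $\overline{x}+v^\perp$ is a supporting hyperplane for $K_F$. (iii) $\mathrm{Ort}(\partial K_F)\subseteq\mathrm{Cont}(F)$.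
   Context: $\mathbb{S}^{n-1}$ is the unit sphere. A function $G$ is 1-homogeneous if $G(\lambda x)=\lambda G(x)$ for $\lambda\ge0$, positive if $G>0$ on $\mathbb{S}^{n-1}$; an integrand is a lower semicontinuous, 1-homogeneous, positive function. $K_F:=\bigcap_{v\in\mathbb{S}^{n-1}}\{z:\langle z,v\rangle\le F(v)\}$. Operators: $\mathcal{W}(F)(v):=\inf_{w\in\mathbb{S}^{n-1},\langle v,w\rangle>0}F(w)/\langle v,w\rangle$, $\mathcal{A}(G)(v):=\sup_{w\in\mathbb{S}^{n-1}}G(w)\langle v,w\rangle$ for $v\in\mathbb{S}^{n-1}$, extended by 1-homogeneity; $\mathcal{D}(F):=\mathcal{A}(\mathcal{W}(F))$. $\mathrm{Cont}(F):=\{x:F(x)=\mathcal{D}(F)(x)\}$. For $u\ne0$, ''$\overline{x}+u^\perp$ is a supporting hyperplane for $K_F$'' means $\overline{x}+u^\perp=\{z:\langle z,u\rangle=\max_{y\in K_F}\langle y,u\rangle\}$. For convex $K$ and $y\in\partial K$, $\mathcal{N}_y\partial K:=\{N:\langle N,z-y\rangle\le0\ \forall z\in K\}$; if $\mathcal{N}_y\partial K\cap\mathbb{S}^{n-1}$ is a singleton its element is $N_{\partial K}(y)$; $\mathrm{Ort}(\partial K):=\{v\ne0:\exists y\in\partial K,\ N_{\partial K}(y)\text{ defined and } =v/|v|\}$. *)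

(* Defs.v *)
(* R : realType, vectors of R^n are row vectors 'rV[R]_n,
   equipped with the library topology (equivalent to the Euclidean one). *)
From HB Require Import structures.
From mathcomp Require Import all_boot all_order all_algebra.
From mathcomp Require Import all_classical all_reals all_analysis.
Set Implicit Arguments. Unset Strict Implicit. Unset Printing Implicit Defensive.
Import Order.TTheory GRing.Theory Num.Theory.
Import numFieldNormedType.Exports.
Local Open Scope classical_set_scope.
Local Open Scope ring_scope.

Section Defs.
Variables (R : realType) (n : nat).
Notation vec := 'rV[R]_n.

Definition dot (x y : vec) : R := \sum_(i < n) x ord0 i * y ord0 i.
Definition enorm (x : vec) : R := Num.sqrt (dot x x).

Definition sphere : set vec := [set v | enorm v = 1].

Definition one_homogeneous (G : vec -> R) : Prop :=
  forall (lam : R) (x : vec), 0 <= lam -> G (lam *: x) = lam * G x.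

Definition positive_on_sphere (G : vec -> R) : Prop :=
  forall v, sphere v -> 0 < G v.

Definition convex_fun (G : vec -> R) : Prop :=
  forall (x y : vec) (t : R), 0 <= t <= 1 ->
    G (t *: x + (1 - t) *: y) <= t * G x + (1 - t) * G y.

Definition integrand (F : vec -> R) : Prop :=
  lower_semicontinuous (fun x => (F x)%:E) /\ one_homogeneous F /\
  positive_on_sphere F.

Definition KF (F : vec -> R) : set vec :=
  [set z | forall v, sphere v -> dot z v <= F v].

Definition hom_ext (g : vec -> R) (x : vec) : R :=
  if x == 0 then 0 else enorm x * g ((enorm x)^-1 *: x).

Definition W_sph (F : vec -> R) (v : vec) : R :=
  inf [set F w / dot v w | w in [set w | sphere w /\ 0 < dot v w]].
Definition W (F : vec -> R) : vec -> R := hom_ext (W_sph F).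

Definition A_sph (G : vec -> R) (v : vec) : R :=
  sup [set G w * dot v w | w in sphere].
Definition A (G : vec -> R) : vec -> R := hom_ext (A_sph G).

Definition D (F : vec -> R) : vec -> R := A (W F).

Definition Cont (F : vec -> R) : set vec := [set x | F x = D F x].

Definition support_fun (K : set vec) (x : vec) : R := sup [set dot x y | y in K].

Definition supporting_hyperplane (K : set vec) (xbar u : vec) : Prop :=
  exists m : R, (exists2 y, K y & dot y u = m) /\ (forall y, K y -> dot y u <= m) /\
    [set xbar + z | z in [set z | dot z u = 0]] = [set z | dot z u = m].

Definition boundary (K : set vec) : set vec := closure K `\` interior K.

Definition normal_cone (K : set vec) (y : vec) : set vec :=
  [set N | forall z, K z -> dot N (z - y) <= 0].

Definition Ort (K : set vec) : set vec :=
  [set v | v != 0 /\ exists2 y, boundary K y &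
     normal_cone K y `&` sphere = [set (enorm v)^-1 *: v]].
End Defs.

(* Main.v *)
Require Import Defs.
From HB Require Import structures.
From mathcomp Require Import all_boot all_order all_algebra.
From mathcomp Require Import all_classical all_reals all_analysis.
From mathcomp Require Import lra.
Import Order.TTheory GRing.Theory Num.Theory.
Import numFieldNormedType.Exports.
Local Open Scope classical_set_scope.
Local Open Scope ring_scope.
Set Implicit Arguments. Unset Strict Implicit.


Section H.
Variables (R : realType) (n : nat).
Local Notation vec := 'rV[R]_n.
Implicit Types x y z w v : vec.

Lemma dotC x y : dot x y = dot y x.
Proof. by apply: eq_bigr => i _; rewrite mulrC. Qed.

Lemma dotDl x y z : dot (x + y) z = dot x z + dot y z.
Proof. by rewrite /dot -big_split; apply: eq_bigr => i _; rewrite mxE mulrDl. Qed.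

Lemma dotZl a x y : dot (a *: x) y = a * dot x y.
Proof. by rewrite /dot mulr_sumr; apply: eq_bigr => i _; rewrite mxE mulrA. Qed.

Lemma dotNl x y : dot (- x) y = - dot x y.
Proof. by rewrite -scaleN1r dotZl mulN1r. Qed.

Lemma dotBl x y z : dot (x - y) z = dot x z - dot y z.
Proof. by rewrite dotDl dotNl. Qed.

Lemma dot0l x : dot 0 x = 0.
Proof. by rewrite -(scale0r x) dotZl mul0r. Qed.

Lemma dotDr x y z : dot x (y + z) = dot x y + dot x z.
Proof. by rewrite dotC dotDl !(dotC x). Qed.

Lemma dotZr a x y : dot x (a *: y) = a * dot x y.
Proof. by rewrite dotC dotZl dotC. Qed.

Lemma dotNr x y : dot x (- y) = - dot x y.
Proof. by rewrite dotC dotNl dotC. Qed.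

Lemma dotBr x y z : dot x (y - z) = dot x y - dot x z.
Proof. by rewrite dotDr dotNr. Qed.

Lemma dot0r x : dot x 0 = 0.
Proof. by rewrite dotC dot0l. Qed.

Lemma dot_ge0 x : 0 <= dot x x.
Proof. by apply: sumr_ge0 => i _; rewrite -expr2 sqr_ge0. Qed.

Lemma dot_eq0 x : dot x x = 0 -> x = 0.
Proof.
move=> /eqP; rewrite psumr_eq0; last by move=> i _; rewrite -expr2 sqr_ge0.
move=> /allP H; apply/rowP => i; rewrite mxE.
have := H i (mem_index_enum i); rewrite -expr2 sqrf_eq0 => /eqP //.
Qed.

Lemma sphere_dot v : sphere v -> dot v v = 1.
Proof.
rewrite /sphere /enorm /= => h.
by rewrite -(sqr_sqrtr (dot_ge0 v)) h expr1n.
Qed.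

Lemma enormZ a x : enorm (a *: x) = `|a| * enorm x.
Proof.
rewrite /enorm dotZl dotZr mulrA -expr2 sqrtrM ?sqr_ge0 //.
by rewrite sqrtr_sqr.
Qed.

Lemma enorm_gt0 x : x != 0 -> 0 < enorm x.
Proof.
move=> x0; rewrite /enorm sqrtr_gt0 lt_def dot_ge0 andbT.
by apply/eqP => /dot_eq0 /eqP; rewrite (negbTE x0).
Qed.

Lemma normalize_sphere x : x != 0 -> sphere ((enorm x)^-1 *: x).
Proof.
move=> /enorm_gt0 h; rewrite /sphere /= enormZ ger0_norm ?invr_ge0 ?ltW //.
by rewrite mulVf // gt_eqF.
Qed.

Lemma normalizeK x : x != 0 -> enorm x *: ((enorm x)^-1 *: x) = x.
Proof. by move=> /enorm_gt0 h; rewrite scalerA mulfV ?gt_eqF // scale1r. Qed.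

Lemma sphere_coord w i : sphere w -> `|w ord0 i| <= 1.
Proof.
move=> /sphere_dot h.
have : w ord0 i * w ord0 i <= 1.
  rewrite -h /dot (bigD1 i) //= lerDl; apply: sumr_ge0 => j _.
  by rewrite -expr2 sqr_ge0.
move=> h2.
have h3 := normr_ge0 (w ord0 i).
have h4 : `|w ord0 i| * `|w ord0 i| <= 1 by rewrite -normrM ger0_norm // -expr2 sqr_ge0.
 nra.
Qed.

Lemma dot_delta x i : dot x (delta_mx 0 i) = x ord0 i.
Proof.
rewrite /dot (bigD1 i) //= big1 ?addr0; first by rewrite mxE !eqxx mulr1.
by move=> j ji; rewrite mxE eqxx /= (negbTE ji) mulr0.
Qed.

Lemma sphere_delta i : sphere (delta_mx 0 i : vec).
Proof. by rewrite /sphere /= /enorm dot_delta mxE !eqxx sqrtr1. Qed.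

Lemma sphereN w : sphere w -> sphere (- w).
Proof. by rewrite /sphere /= -scaleN1r enormZ normrN normr1 mul1r. Qed.

Lemma dot_bound x y a b : (forall i, `|x ord0 i| <= a) -> (forall i, `|y ord0 i| <= b) ->
  `|dot x y| <= n%:R * (a * b).
Proof.
move=> ha hb; rewrite /dot; apply: le_trans (ler_norm_sum _ _ _) _.
rewrite mulr_natl -[X in _ *+ X]card_ord -sumr_const; apply: ler_sum => i _.
rewrite normrM; apply: ler_pM => //; exact: (le_trans (normr_ge0 _) (ha i)) || done.
Qed.

End H.



Section HBsec.
Variables (R : realType) (n : nat).
Local Notation vec := 'rV[R]_n.
Variable p : vec -> R.
Hypothesis pZ : forall (t : R) (x : vec), 0 <= t -> p (t *: x) = t * p x.
Hypothesis pD : forall x y : vec, p (x + y) <= p x + p y.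

Definition good (b : nat -> vec) (c : nat -> R) k :=
  forall l : nat -> R, \sum_(i < k) l i * c i <= p (\sum_(i < k) l i *: b i).

Lemma p0 : p 0 = 0.
Proof. by rewrite -(scale0r 0) pZ // mul0r. Qed.

Lemma extend (b : nat -> vec) (c : nat -> R) (k : nat) : good b c k ->
  exists d, good b (fun i => if i == k then d else c i) k.+1.
Proof.
move=> g.
pose f (l : nat -> R) := \sum_(i < k) l i * c i.
pose v (l : nat -> R) := \sum_(i < k) l i *: b i.
have fD l m : f (fun i => l i + m i) = f l + f m.
  by rewrite /f -big_split; apply: eq_bigr => i _; rewrite mulrDl.
have vD l m : v (fun i => l i + m i) = v l + v m.
  by rewrite /v -big_split; apply: eq_bigr => i _; rewrite scalerDl.
have fZ a l : f (fun i => a * l i) = a * f l.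
  by rewrite /f mulr_sumr; apply: eq_bigr => i _; rewrite mulrA.
have vZ a l : v (fun i => a * l i) = a *: v l.
  by rewrite /v scaler_sumr; apply: eq_bigr => i _; rewrite scalerA.
have key l m : f l - p (v l - b k) <= p (v m + b k) - f m.
  have h : f l + f m <= p (v l + v m) by rewrite -fD -vD; exact: g.
  have e : v l + v m = (v l - b k) + (v m + b k) by rewrite addrACA addNr addr0.
  rewrite e in h; have := pD (v l - b k) (v m + b k); lra.
pose S := [set f l - p (v l - b k) | l in [set: nat -> R]].
have hS : has_sup S.
  split; first by exists (f (fun=> 0) - p (v (fun=> 0) - b k)); exists (fun=> 0).
  exists (p (v (fun=> 0) + b k) - f (fun=> 0)) => _ [l _ <-]; exact: key.
pose d := sup S.
have d1 l : f l - p (v l - b k) <= d by apply: sup_upper_bound => //; exists l.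
have d2 m : d <= p (v m + b k) - f m.
  apply: ge_sup; first by case: hS.
  by move=> _ [l _ <-]; exact: key.
exists d => L.
rewrite !big_ord_recr /= eqxx.
have -> : \sum_(i < k) L i * (if i == k :> nat then d else c i) = f L.
  by apply: eq_bigr => i _; rewrite ltn_eqF.
rewrite -/(v L).
have [muneg|mupos|mu0] := ltgtP (L k) 0; last first.
- by rewrite mu0 mul0r scale0r !addr0; exact: g.
- have hm := d2 (fun i => (L k)^-1 * L i).
  rewrite fZ vZ in hm.
  have e : v L + L k *: b k = L k *: ((L k)^-1 *: v L + b k).
    by rewrite scalerDr scalerA mulfV ?gt_eqF // scale1r.
  rewrite e pZ; last exact: ltW.
  have : L k * d <= L k * (p ((L k)^-1 *: v L + b k) - (L k)^-1 * f L).
    by rewrite ler_pM2l.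
  by rewrite mulrBr mulrA mulfV ?gt_eqF // mul1r; lra.
- have nu : 0 < - L k by rewrite oppr_gt0.
  have hm := d1 (fun i => (- L k)^-1 * L i).
  rewrite fZ vZ in hm.
  have e : v L + L k *: b k = - L k *: ((- L k)^-1 *: v L - b k).
    by rewrite scalerBr scalerA mulfV ?gt_eqF // scale1r scaleNr opprK.
  rewrite e pZ; last exact: ltW.
  have : - L k * ((- L k)^-1 * f L - p ((- L k)^-1 *: v L - b k)) <= - L k * d.
    by rewrite ler_pM2l.
  by rewrite mulrBr mulrA mulfV ?gt_eqF // mul1r; lra.
Qed.

Definition bvec (x : vec) (i : nat) : vec :=
  if i is j.+1 then \row_(j' < n) ((j' == j :> nat)%:R) else x.

Lemma bvecE x (i : 'I_n) : bvec x (val i).+1 = delta_mx 0 i.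
Proof.
by apply/rowP => j; rewrite !mxE eqxx /=.
Qed.

Definition lvec (a : R) (z : vec) (i : nat) : R :=
  if i is j.+1 then oapp (fun o : 'I_n => z ord0 o) 0 (insub j) else a.

Lemma lvecE a z (i : 'I_n) : lvec a z (val i).+1 = z ord0 i.
Proof. by rewrite /= valK. Qed.

Lemma hahn_banach (x : vec) :
  exists y : vec, (forall z, dot y z <= p z) /\ p x <= dot y x.
Proof.
have ind k : exists c : nat -> R, c 0%N = p x /\ good (bvec x) c k.+1.
  elim: k => [|k [c [c0 gc]]].
    exists (fun=> p x); split => // l.
    rewrite !big_ord1 /=.
    have [l0|l0] := leP 0 (l 0%N); first by rewrite pZ.
    have e : l 0%N *: x = (- l 0%N) *: (- x) by rewrite scaleNr scalerN opprK.
    rewrite e pZ; last by rewrite oppr_ge0 ltW.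
    have := pD x (- x); rewrite subrr p0 => h.
    have : 0 <= - l 0%N * (p x + p (- x)) by rewrite mulr_ge0 // ?oppr_ge0 ?ltW //; lra.
    lra.
  have [d gd] := @extend _ _ _ gc.
  by exists (fun i => if i == k.+1 then d else c i); split.
have [c [c0 gc]] := ind n.
exists (\row_(j < n) c (val j).+1).
have sumE (l : nat -> R) : \sum_(i < n.+1) l i * c i =
    l 0%N * c 0%N + \sum_(j < n) l (val j).+1 * c (val j).+1.
  by rewrite big_ord_recl.
have vsE (l : nat -> R) : \sum_(i < n.+1) l i *: bvec x i =
    l 0%N *: x + \sum_(j < n) l (val j).+1 *: delta_mx 0 j.
  by rewrite big_ord_recl /=; congr (_ + _); apply: eq_bigr => j _;
     rewrite -(bvecE x).
have dotE (z : vec) : dot (\row_(j < n) c (val j).+1) z =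
    \sum_(j < n) lvec 0 z (val j).+1 * c (val j).+1.
  by apply: eq_bigr => j _; rewrite lvecE mxE mulrC.
have zE (z : vec) : \sum_(j < n) lvec 0 z (val j).+1 *: delta_mx 0 j = z.
  rewrite [RHS]row_sum_delta; apply: eq_bigr => j _; by rewrite lvecE.
split.
- move=> z; have := gc (lvec 0 z).
  by rewrite sumE vsE /= mul0r scale0r !add0r zE dotE.
- have := gc (lvec 1 (- x)).
  rewrite sumE vsE /= mul1r scale1r zE c0 subrr p0.
  have -> : \sum_(j < n) lvec 1 (- x) (val j).+1 * c (val j).+1 =
     - dot (\row_(j < n) c (val j).+1) x.
    rewrite /dot -sumrN; apply: eq_bigr => j _; rewrite lvecE !mxE.
    by rewrite mulNr mulrC.
  lra.
Qed.

End HBsec.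



Section Main.
Variables (R : realType) (n : nat).
Local Notation vec := 'rV[R]_n.
Variable F : vec -> R.
Hypothesis n0 : (0 < n)%N.
Hypothesis hF : integrand F.
Implicit Types x y z w u v : vec.

Local Notation K := (KF F).
Local Notation h := (support_fun K).

Lemma Fpos w : sphere w -> 0 < F w.
Proof. by case: hF => _ [_]; apply. Qed.

Lemma Fhom : one_homogeneous F.
Proof. by case: hF => _ []. Qed.

Lemma K0 : K 0.
Proof. by move=> v sv; rewrite dot0l ltW // Fpos. Qed.

Definition ecol (i : 'I_n) : vec := delta_mx 0 i.

Definition Mb := \sum_(j < n) (F (ecol j) + F (- ecol j)).

Lemma Kcoord y i : K y -> `|y ord0 i| <= Mb.
Proof.
move=> Ky.
have h1 := Ky _ ((@sphere_delta R n i)).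
have h2 := Ky _ (sphereN ((@sphere_delta R n i))).
rewrite dotNr dot_delta in h2; rewrite dot_delta in h1.
have p1 := Fpos ((@sphere_delta R n i)); have p2 := Fpos (sphereN ((@sphere_delta R n i))).
have : F (ecol i) + F (- ecol i) <= Mb.
  rewrite /Mb (bigD1 i) //= lerDl; apply: sumr_ge0 => j _.
  by apply: addr_ge0; apply: ltW; apply: Fpos; [exact: sphere_delta | exact/sphereN/sphere_delta].
rewrite /ecol => hM.
rewrite ler_norml; apply/andP; split; lra.
Qed.

Definition cb (x : vec) := \sum_(j < n) `|x ord0 j|.

Lemma cb_coord x i : `|x ord0 i| <= cb x.
Proof.
by rewrite /cb (bigD1 i) //= lerDl; apply: sumr_ge0 => j _.
Qed.

Lemma dotK_bound x y : K y -> dot x y <= n%:R * (cb x * Mb).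
Proof.
move=> Ky; apply: le_trans (ler_norm _) _.
by apply: dot_bound => i; [exact: cb_coord | exact: Kcoord].
Qed.

Lemma hasS x : has_sup [set dot x y | y in K].
Proof.
split; first by exists (dot x 0); exists 0 => //; exact: K0.
by exists (n%:R * (cb x * Mb)) => _ [y Ky <-]; exact: dotK_bound.
Qed.

Lemma h_ub x y : K y -> dot x y <= h x.
Proof. by move=> Ky; apply: sup_upper_bound; [exact: hasS | exists y]. Qed.

Lemma h_le x a : (forall y, K y -> dot x y <= a) -> h x <= a.
Proof.
move=> H; apply: ge_sup; first by exists (dot x 0); exists 0 => //; exact: K0.
by move=> _ [y Ky <-]; exact: H.
Qed.

Lemma h_ge0 x : 0 <= h x.
Proof. by rewrite -(dot0r x); apply: h_ub; exact: K0. Qed.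

Lemma h0 : h 0 = 0.
Proof.
apply/eqP; rewrite eq_le h_ge0 andbT; apply: h_le => y _; by rewrite dot0l.
Qed.

Lemma hZ t x : 0 <= t -> h (t *: x) = t * h x.
Proof.
rewrite le_eqVlt => /orP [/eqP <-|t0]; first by rewrite scale0r h0 mul0r.
apply/eqP; rewrite eq_le; apply/andP; split.
  by apply: h_le => y Ky; rewrite dotZl ler_pM2l // h_ub.
rewrite -ler_pdivlMl //; apply: h_le => y Ky.
rewrite ler_pdivlMl // -dotZl; exact: h_ub.
Qed.

Lemma h_convex : convex_fun h.
Proof.
move=> x y t /andP [t0 t1]; apply: h_le => z Kz.
rewrite dotDl !dotZl; apply: lerD; apply: ler_wpM2l => //; rewrite ?subr_ge0 //;
exact: h_ub.
Qed.

Lemma h_leF u : sphere u -> h u <= F u.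
Proof. by move=> su; apply: h_le => y Ky; rewrite dotC; exact: Ky. Qed.

Lemma sphere_neq0 (w : vec) : sphere w -> w != 0.
Proof.
move=> sw; apply/eqP => w0; move: sw; rewrite /sphere /= w0 /enorm dot0l sqrtr0.
by move/eqP; rewrite eq_sym oner_eq0.
Qed.

Lemma hom_ext_sphere (g : vec -> R) w : sphere w -> hom_ext g w = g w.
Proof.
move=> sw; rewrite /hom_ext (negbTE (sphere_neq0 sw)).
have -> : enorm w = 1 by exact: sw.
by rewrite invr1 scale1r mul1r.
Qed.

Local Notation rho := (W_sph F).

Lemma rho_lb v : has_lbound [set F w / dot v w | w in [set w | sphere w /\ 0 < dot v w]].
Proof.
by exists 0 => _ [w [sw dw] <-]; rewrite divr_ge0 // ltW // Fpos.
Qed.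

Lemma rho_ne v : sphere v -> [set F w / dot v w | w in [set w | sphere w /\ 0 < dot v w]] !=set0.
Proof.
move=> sv; exists (F v / dot v v); exists v => //; split => //.
by rewrite sphere_dot // ltr01.
Qed.

Lemma rho_ge0 v : sphere v -> 0 <= rho v.
Proof.
move=> sv; apply: lb_le_inf; first exact: rho_ne.
by move=> _ [w [sw dw] <-]; rewrite divr_ge0 // ltW // Fpos.
Qed.

Lemma rhoK v : sphere v -> K (rho v *: v).
Proof.
move=> sv u su; rewrite dotZl.
have [dpos|dneg] := ltP 0 (dot v u).
  have : rho v <= F u / dot v u.
    by apply: ge_inf; [exact: rho_lb | exists u].
  by rewrite ler_pdivlMr.
apply: le_trans (ltW (Fpos su)).
by rewrite mulr_ge0_le0 // rho_ge0.
Qed.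

Lemma rho_max w t : sphere w -> K (t *: w) -> t <= rho w.
Proof.
move=> sw Kt; apply: lb_le_inf; first exact: rho_ne.
move=> _ [u [su du] <-]; rewrite ler_pdivlMr //.
by have := Kt u su; rewrite dotZl.
Qed.

Lemma A_h v : sphere v -> A_sph (W F) v = h v.
Proof.
move=> sv.
have ub : forall w, sphere w -> W F w * dot v w <= h v.
  move=> w sw; rewrite /W hom_ext_sphere // -dotZr; exact/h_ub/rhoK.
have hU : has_sup [set W F w * dot v w | w in @sphere R n].
  split; first by exists (W F v * dot v v); exists v.
  by exists (h v) => _ [w sw <-]; exact: ub.
have U0 : 0 <= A_sph (W F) v.
  apply: le_trans (sup_upper_bound hU _); last by exists v.
  by rewrite sphere_dot // mulr1 /W hom_ext_sphere // rho_ge0.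
apply/eqP; rewrite eq_le; apply/andP; split.
  apply: ge_sup; first by case: hU.
  by move=> _ [w sw <-]; exact: ub.
apply: h_le => y Ky.
have [->|y0] := eqVneq y 0; first by rewrite dot0r.
set u := (enorm y)^-1 *: y.
have su : sphere u := normalize_sphere y0.
have ey : y = enorm y *: u by rewrite normalizeK.
have le1 : enorm y <= rho u by apply: rho_max => //; rewrite -ey.
rewrite ey dotZr.
have [dpos|dneg] := leP 0 (dot v u).
  apply: le_trans (sup_upper_bound hU _); last by exists u.
  rewrite /W hom_ext_sphere // ler_wpM2r //.
apply: le_trans U0; apply: mulr_ge0_le0; last exact: ltW.
exact: ltW (enorm_gt0 y0).
Qed.

Lemma D_h x : D F x = h x.
Proof.
rewrite /D /A /hom_ext; case: eqP => [->|/eqP x0]; first by rewrite h0.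
rewrite A_h; last exact: normalize_sphere.
by rewrite -hZ ?normalizeK // ltW // enorm_gt0.
Qed.

End Main.



Section Bd.
Variables (R : realType) (n : nat).
Local Notation vec := 'rV[R]_n.
Variable F : vec -> R.
Hypothesis n0 : (0 < n)%N.
Hypothesis hF : integrand F.
Implicit Types x y z w u v : vec.
Local Notation K := (KF F).

Lemma ball_coord y z (e : R) i : ball y e z -> `|y ord0 i - z ord0 i| < e.
Proof. by move=> [_ /(_ ord0 i)]. Qed.

Lemma dot_small y z w (e b : R) : ball y e z -> (forall i, `|w ord0 i| <= b) ->
  `|dot z w - dot y w| <= n%:R * (e * b).
Proof.
move=> byz hw; rewrite -dotBl -normrN -dotNl opprB.
apply: dot_bound => // i; rewrite !mxE; apply: ltW.
by rewrite -normrN opprB; rewrite distrC; exact: ball_coord.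
Qed.

Lemma closure_K y : closure K y -> K y.
Proof.
move=> cy u su; rewrite leNgt; apply/negP => lt.
set d := dot y u - F u.
have d0 : 0 < d by rewrite subr_gt0.
have n1 : 0 < n%:R + 1 :> R by rewrite ltr_wpDl.
set r := d / (n%:R + 1).
have r0 : 0 < r by rewrite divr_gt0.
have rE : r * (n%:R + 1) = d by rewrite /r divfK // gt_eqF.
have [z [Kz byz]] := cy _ (nbhsx_ballx y r r0).
have := dot_small byz (fun i => sphere_coord i su).
have := Kz u su; rewrite mulr1 => hz hs.
have := ler_norm (dot y u - dot z u); rewrite -normrN opprB => hn.
have dE : d = dot y u - F u by [].
lra.
Qed.

Lemma boundary_active y : boundary K y ->
  K y /\ exists w, sphere w /\ dot y w = F w.
Proof.
move=> [cy ny]; have Ky := closure_K cy; split => //.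
have H (k : nat) : exists q : vec * vec,
    [/\ ball y (k.+1%:R^-1) q.1, sphere q.2 & F q.2 < dot q.1 q.2].
  case: (pselect (exists q : vec * vec,
    [/\ ball y (k.+1%:R^-1) q.1, sphere q.2 & F q.2 < dot q.1 q.2])) => // nE.
  exfalso; apply: ny; apply/nbhs_ballP; exists (k.+1%:R^-1) => //= z bz u su.
  rewrite leNgt; apply/negP => lt; apply: nE; exists (z, u); split => //.
have [pw Hpw] := choice H.
pose w k := (pw k).2.
pose z k := (pw k).1.
pose B := [set q : vec | forall i, `[-1, 1]%classic (q ord0 i)].
have cB : compact B.
  exact: (@rV_compact R n (fun=> `[-1, 1]%classic) (fun=> @segment_compact R (-1) 1)).
have FB : (w @ \oo) B.
  exists 0%N => // k _ i /=; rewrite in_itv /= -ler_norml.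
  by have [_ ? _] := Hpw k; exact: sphere_coord.
have [p [Bp clp]] := cB _ (fmap_proper_filter _ _) FB.
have pc i : `|p ord0 i| <= 1.
  by have := Bp i; rewrite /= in_itv /= -ler_norml.
have near (N : nat) (r : R) : 0 < r -> exists2 k, (N <= k)%N & ball p r (w k).
  move=> r0.
  have := clp [set q | exists2 k, (N <= k)%N & q = w k] (ball p r).
  case.
  - by exists N => // k hk; exists k.
  - exact: nbhsx_ballx.
  by move=> _ [[k hk ->] bk]; exists k.
have sp : sphere p.
  suff e : dot p p = 1.
    by rewrite /sphere /= /enorm e sqrtr1.
  apply: contrapT => hne.
  set d := `|dot p p - 1|.
  have d0 : 0 < d by rewrite normr_gt0 subr_eq0; apply/eqP.
  have n1 : 0 < 2 * n%:R + 1 :> R by rewrite ltr_wpDl // mulr_ge0.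
  set r := d / (2 * n%:R + 1).
  have r0 : 0 < r by rewrite divr_gt0.
  have rE : r * (2 * n%:R + 1) = d by rewrite /r divfK // gt_eqF.
  have [k _ bk] := near 0%N r r0.
  have [_ swk _] := Hpw k.
  have wc i : `|w k ord0 i| <= 1 by exact: sphere_coord.
  have e1 := dot_small bk wc.
  have e2 := dot_small bk pc.
  rewrite (dotC (w k) p) in e2.
  have w1 : dot (w k) (w k) = 1 by exact: sphere_dot.
  rewrite w1 mulr1 in e1; rewrite mulr1 in e2.
  have t1 := ler_norm (dot p (w k) - dot p p).
  have t2 := ler_norm (1 - dot p (w k)).
  have t3 := ler_norm (-(1 - dot p (w k))).
  have t4 := ler_norm (-(dot p (w k) - dot p p)).
  rewrite normrN in t3; rewrite normrN in t4.
  have : d = `|dot p p - 1| by [].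
  case: (lerP 0 (dot p p - 1)) => hs; [rewrite ger0_norm // | rewrite ltr0_norm //];
  move=> dE; nra.
exists p; split => //.
apply/eqP; rewrite eq_le Ky //=; rewrite leNgt; apply/negP => lt.
set a := (dot y p + F p) / 2.
have [V nV hV] : exists2 V, nbhs p V & forall q, V q -> (a%:E < (F q)%:E)%E.
  by case: hF => lsc _; apply: lsc; rewrite lte_fin /a; lra.
have [r1 r10 br1] := (nbhs_ballP _ _).1 nV.
set d := a - dot y p.
have d0 : 0 < d by rewrite /d /a; lra.
have cb0 : 0 <= cb y by apply: sumr_ge0.
have m1 : 0 < 2 * (n%:R * cb y + 1) :> R.
  by rewrite mulr_gt0 // ltr_wpDl // mulr_ge0.
set r2 := d / (2 * (n%:R * cb y + 1)).
have r20 : 0 < r2 by rewrite divr_gt0.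
have r2E : r2 * (2 * (n%:R * cb y + 1)) = d by rewrite /r2 divfK // gt_eqF.
set r := Num.min r1 r2.
have r0 : 0 < r by rewrite lt_min r10 r20.
have [N hN] : exists N : nat, 2 * n%:R / d < N.+1%:R.
  by exists (Num.trunc (2 * n%:R / d)); exact: truncnS_gt.
have [k hk bk] := near N r r0.
have [bz swk lt2] := Hpw k.
have Vk : V (w k) by apply: br1; apply: le_ball bk; rewrite ge_min lexx.
have := hV _ Vk; rewrite lte_fin => aF.
have wc i : `|w k ord0 i| <= 1 by exact: sphere_coord.
have e1 := dot_small bz wc.
have e2 := dot_small bk (fun i => cb_coord y i).
rewrite (dotC (w k) y) (dotC p y) in e2.
have t1 := ler_norm (dot (z k) (w k) - dot y (w k)).
have t2 := ler_norm (dot y (w k) - dot y p).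
rewrite mulr1 in e1.
have rr2 : r <= r2 by rewrite ge_min lexx orbT.
have hb2 : n%:R * (r * cb y) <= d / 2.
  have : n%:R * (r * cb y) <= n%:R * (r2 * cb y).
    by rewrite ler_wpM2l // ler_wpM2r.
  have : 0 <= r2 * (n%:R * cb y).
    by apply: mulr_ge0; [exact: ltW | apply: mulr_ge0].
  nra.
have ek : k.+1%:R^-1 <= N.+1%:R^-1 :> R.
  by rewrite lef_pV2 ?posrE // ler_nat ltnS.
have hb1 : n%:R * N.+1%:R^-1 < d / 2 :> R.
  move: hN; rewrite ltr_pdivrMr // ltr_pdivrMr //; lra.
have : n%:R * k.+1%:R^-1 <= n%:R * N.+1%:R^-1 :> R by rewrite ler_wpM2l.
move=> hb3.
change (pw k).1 with (z k) in e1.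
change (pw k).1 with (z k) in lt2.
change (pw k).2 with (w k) in lt2.
have aE : a = (dot y p + F p)/2 by [].
have S1 : dot (z k) (w k) - dot y (w k) < d / 2.
  exact: le_lt_trans t1 (le_lt_trans e1 (le_lt_trans hb3 hb1)).
have S2 : dot y (w k) - dot y p <= d / 2 by exact: le_trans t2 (le_trans e2 hb2).
have dE : d = a - dot y p by [].
clear -S1 S2 dE aE aF lt2.
lra.
Qed.

End Bd.

Unset Implicit Arguments. Set Strict Implicit.

Theorem lemma2p3 (R : realType) (n : nat) (F : 'rV[R]_n -> R) :
  (2 <= n)%N -> integrand F ->
  (* (i) *)
  ((forall x, D F x = support_fun (KF F) x) /\ convex_fun (D F) /\
   (forall G : 'rV[R]_n -> R, convex_fun G -> one_homogeneous G ->
      positive_on_sphere G -> (forall x, G x <= F x) ->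
      forall x, G x <= D F x)) /\
  (* (ii) *)
  (forall v xbar, sphere v -> KF F xbar ->
     (D F v = dot v xbar <->
        (exists2 z, dot z v = 0 & xbar = D F v *: v + z)) /\
     ((exists2 z, dot z v = 0 & xbar = D F v *: v + z) <->
        supporting_hyperplane (KF F) xbar v)) /\
  (* (iii) *)
  Ort (KF F) `<=` Cont F.
Proof.
move=> n2 hF.
have n0 : (0 < n)%N by apply: leq_trans n2.
have DE x : D F x = support_fun (KF F) x := D_h hF x.
split; [split; [exact: DE | split] | split].
- by move=> x y t ht; rewrite !DE; exact: (h_convex hF).
- move=> G cG hG _ GF x.
  have pD : forall x y : 'rV[R]_n, G (x + y) <= G x + G y.
    move=> a b.
    have e : a + b = 2 *: ((1/2) *: a + (1 - 1/2) *: b).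
      rewrite scalerDr !scalerA.
      have -> : (2 : R) * (1/2) = 1 by rewrite mul1r mulfV // pnatr_eq0.
      have -> : (2 : R) * (1 - 1/2) = 1.
        by rewrite mulrBr mulr1 mul1r mulfV ?pnatr_eq0 //; lra.
      by rewrite !scale1r.
    have h12 : (0 <= 1/2 :> R) && (1/2 <= 1 :> R) by apply/andP; split; lra.
    rewrite e hG; last by lra.
    have := cG a b _ h12; lra.
  have [yv [hy hx]] := hahn_banach hG pD x.
  rewrite DE; apply: le_trans hx _; rewrite dotC; apply: (h_ub hF).
  by move=> v sv; apply: le_trans (hy v) (GF v).
- move=> v xb sv Kx.
  have vv := sphere_dot sv.
  have eq1 : D F v = dot v xb <-> exists2 z, dot z v = 0 & xb = D F v *: v + z.
    split.
      move=> e; exists (xb - D F v *: v).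
        by rewrite dotBl dotZl vv mulr1 dotC e subrr.
      by rewrite addrC subrK.
    by move=> [z0 hz ->]; rewrite dotDr dotZr vv mulr1 dotC hz addr0.
  split => //; split.
    move=> [z0 hz exb].
    have hxb : dot xb v = D F v by rewrite exb dotDl dotZl vv mulr1 hz addr0.
    exists (D F v); split; first by exists xb.
    split; first by move=> y Ky; rewrite DE dotC; exact: (h_ub hF).
    apply/seteqP; split.
      by move=> _ [z1 hz1 <-] /=; rewrite dotDl hz1 addr0.
    move=> z1 hz1 /=; exists (z1 - xb); last by rewrite addrC subrK.
    by rewrite /= dotBl hz1 hxb subrr.
  move=> [m [[y0 Ky0 hy0] [hub hset]]].
  have hx : dot xb v = m.
    have : [set z | dot z v = m] xb.
      by rewrite -hset; exists 0; [rewrite /= dot0l | rewrite addr0].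
    by [].
  have hDm : D F v = m.
    rewrite DE; apply/eqP; rewrite eq_le; apply/andP; split.
      by apply: (h_le hF) => y Ky; rewrite dotC; exact: hub.
    by rewrite -hy0 dotC; exact: (h_ub hF).
  by apply eq1.1; rewrite hDm dotC hx.
- move=> v [v0 [y hby hN]]; rewrite /Cont /=.
  have [Ky [w [sw dyw]]] := boundary_active hF hby.
  set u := (enorm v)^-1 *: v.
  have wN : (normal_cone (KF F) y `&` @sphere R n) w.
    split => // z Kz; rewrite dotBr dotC (dotC w y) dyw subr_le0; exact: Kz w sw.
  rewrite hN in wN.
  have wu : w = u := wN.
  have Fu : F u = support_fun (KF F) u.
    apply/eqP; rewrite eq_le; apply/andP; split; last first.
      by apply: (h_leF hF); rewrite -wu.
    by rewrite -wu -dyw dotC; exact: (h_ub hF).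
  have e0 : 0 <= enorm v by exact: ltW (enorm_gt0 v0).
  rewrite DE -(normalizeK v0) -/u.
  by rewrite (Fhom hF) // (hZ hF) // Fu.
Qed.
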